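(* Let $V\subseteq\mathbb{R}^n$ be convex, $F\colon V\to\mathbb{R}^n$ globally Lipschitz, and $\tilde F\colon V^N\to\mathbb{R}^{nN}$, $\tilde F(u)=(F(u_1)^T,\dots,F(u_N)^T)^T$. For $1\le p\le\infty$ and a positive diagonal $Q$, $M^+_{p,Q}[\tilde F]\le M_{p,Q}[F]$.
   Context: On $\mathbb{R}^{nN}$, $\|u\|_{p,Q}=\big\|(\|Qu_1\|_p,\dots,\|Qu_N\|_p)^T\big\|_p$ and $M^+_{p,Q}[\tilde F]=\sup_{u\neq v\in V^N}\lim_{h\to0^+}\frac1h\left(\frac{\|u-v+h(\tilde F(u)-\tilde F(v))\|_{p,Q}}{\|u-v\|_{p,Q}}-1\right)$. On $\mathbb{R}^n$, $\|x\|_{p,Q}=\|Qx\|_p$ and $M_{p,Q}[F]=\lim_{h\to0^+}\sup_{x\neq y\in V}\frac1h\left(\frac{\|x-y+h(F(x)-F(y))\|_{p,Q}}{\|x-y\|_{p,Q}}-1\right)$. *)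

(* Defs.v *)
From HB Require Import structures.
From mathcomp Require Import all_boot all_order all_algebra.
From mathcomp Require Import all_classical all_reals all_analysis.
Set Implicit Arguments. Unset Strict Implicit. Unset Printing Implicit Defensive.
Import Order.TTheory GRing.Theory Num.Theory.
Import numFieldNormedType.Exports.
Local Open Scope classical_set_scope.
Local Open Scope ring_scope.

Definition pnorm {R : realType} (p : \bar R) (k : nat) (x : 'I_k -> R) : R :=
  match p with
  | r%:E => (\sum_(i < k) `|x i| `^ r) `^ r^-1
  | +oo%E => \big[Num.max/0]_(i < k) `|x i|
  | -oo%E => 0
  end.

Definition wnorm {R : realType} (p : \bar R) (n : nat) (Q : 'M[R]_n)
  (x : 'cV[R]_n) : R :=
  pnorm p (fun i => (Q *m x) i 0).

(* R^{nN} is represented by n x N matrices: the i-th block u_i is column i.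
   ||u||_{p,Q} = || (||Q u_1||_p, ..., ||Q u_N||_p)^T ||_p. *)
Definition bnorm {R : realType} (p : \bar R) (n N : nat) (Q : 'M[R]_n)
  (u : 'M[R]_(n, N)) : R :=
  pnorm p (fun i : 'I_N => wnorm p Q (col i u)).

Definition Ftilde {R : realType} (n N : nat) (F : 'cV[R]_n -> 'cV[R]_n)
  (u : 'M[R]_(n, N)) : 'M[R]_(n, N) :=
  \matrix_(j < n, i < N) F (col i u) j 0.

Definition Mlog {R : realType} (p : \bar R) (n : nat) (Q : 'M[R]_n)
  (V : set 'cV[R]_n) (F : 'cV[R]_n -> 'cV[R]_n) : \bar R :=
  lim ((fun h : R =>
          ereal_sup [set e | exists x y, [/\ V x, V y, x <> y &
            e = (h^-1 * (wnorm p Q (x - y + h *: (F x - F y)) / wnorm p Q (x - y)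
                          - 1))%:E]]) @ 0^'+).

Definition Mplus {R : realType} (p : \bar R) (n N : nat) (Q : 'M[R]_n)
  (V : set 'cV[R]_n) (F : 'cV[R]_n -> 'cV[R]_n) : \bar R :=
  ereal_sup [set e | exists u v : 'M[R]_(n, N),
    [/\ (forall i, V (col i u)), (forall i, V (col i v)), u <> v &
     e = lim ((fun h : R =>
       (h^-1 * (bnorm p Q (u - v + h *: (Ftilde F u - Ftilde F v)) / bnorm p Q (u - v)
                 - 1))%:E) @ 0^'+)]].

Definition convex_subset {R : realType} (n : nat) (V : set 'cV[R]_n) : Prop :=
  forall x y (t : R), V x -> V y -> 0 <= t <= 1 -> V (t *: x + (1 - t) *: y).

(* globally Lipschitz on V (w.r.t. the max norm; all norms on R^n are equivalent) *)
Definition glob_lipschitz_on {R : realType} (n : nat) (V : set 'cV[R]_n)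
  (F : 'cV[R]_n -> 'cV[R]_n) : Prop :=
  exists L : R, forall x y, V x -> V y -> `|F x - F y| <= L * `|x - y|.

(* Main.v *)
Require Import Defs.
From HB Require Import structures.
From mathcomp Require Import all_boot all_order all_algebra.
From mathcomp Require Import all_classical all_reals all_analysis.
From mathcomp Require Import ring lra.
Import Order.TTheory GRing.Theory Num.Theory.
Local Open Scope classical_set_scope.
Local Open Scope ring_scope.

Section mink.
Context {R : realType}.

Definition ext {k : nat} (x : 'I_k -> R) (n : nat) : R := oapp x 0 (insub n).

Lemma Lnorm_ext (r : R) k (x : 'I_k -> R) : 0 < r ->
  Lnorm (@counting _ R) r%:E (EFin \o ext x) = ((\sum_(i < k) `|x i| `^ r) `^ r^-1)%:E.
Proof.
move=> r0; rewrite Lnorm_counting//.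
rewrite (nneseries_split 0 k); last by move=> n _; rewrite poweR_ge0.
rewrite add0n eseries0 ?adde0; last first.
  move=> i ki _ /=; rewrite /ext insubN ?normr0 ?powR0 ?gt_eqF//.
  by rewrite -leqNgt.
rewrite big_mkord.
rewrite (eq_bigr (fun i : 'I_k => (`|x i| `^ r)%:E)); last first.
  move=> i _; rewrite /= /ext insubT //= => Hi.
  by congr (`| x _ | `^ r)%:E; apply: val_inj.
by rewrite sumEFin poweR_EFin.
Qed.



Lemma minkowski_fin (r : R) k (x y : 'I_k -> R) : 1 <= r ->
  (\sum_(i < k) `|x i + y i| `^ r) `^ r^-1 <=
  (\sum_(i < k) `|x i| `^ r) `^ r^-1 + (\sum_(i < k) `|y i| `^ r) `^ r^-1.
Proof.
move=> r1; have r0 : 0 < r by apply: lt_le_trans r1.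
have mx : measurable_fun setT (ext x) by [].
have my : measurable_fun setT (ext y) by [].
have := minkowski_EFin (@counting _ R) mx my r1.
have -> : (ext x \+ ext y)%R = ext (fun i => x i + y i).
  apply/funext => m; rewrite /ext /=; case: insubP => [i _ _|_] //=.
  by rewrite addr0.
by rewrite !Lnorm_ext// -EFinD lee_fin.
Qed.


Lemma pnorm_ge0 (p : \bar R) k (x : 'I_k -> R) : (1 <= p)%E -> 0 <= pnorm p x.
Proof.
case: p => [r||] //= _; first exact: powR_ge0.
by elim/big_ind: _ => // a b a0 b0; rewrite le_max a0.
Qed.

Lemma pnorm_le (p : \bar R) k (x y : 'I_k -> R) : (1 <= p)%E ->
  (forall i, `|x i| <= `|y i|) -> pnorm p x <= pnorm p y.
Proof.
case: p => [r||] //=; rewrite ?lee_fin => r1 xy.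
- have r0 : 0 < r by apply: lt_le_trans r1.
  apply: ge0_ler_powR; first by rewrite invr_ge0 ltW.
  - by rewrite nnegrE; apply: sumr_ge0 => *; exact: powR_ge0.
  - by rewrite nnegrE; apply: sumr_ge0 => *; exact: powR_ge0.
  apply: ler_sum => i _; apply: ge0_ler_powR; rewrite ?nnegrE//; exact: ltW.
- elim/big_ind2: _ => // a b c d ab cd.
  rewrite ge_max !le_max ab cd orbT /=.
  by case: (leP b d) => bd; rewrite ?orbT //= (le_trans cd) ?ltW.
Qed.

Lemma pnormD (p : \bar R) k (x y : 'I_k -> R) : (1 <= p)%E ->
  pnorm p (fun i => x i + y i) <= pnorm p x + pnorm p y.
Proof.
case: p => [r||] //=; rewrite ?lee_fin => r1.
- exact: minkowski_fin.
- apply: bigmax_le; first by apply: addr_ge0; [exact: (@pnorm_ge0 +oo%E _ x (leey _))|exact: (@pnorm_ge0 +oo%E _ y (leey _))].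
  move=> i _; apply: le_trans (ler_normD _ _) _.
  by apply: lerD; apply: le_bigmax.
Qed.

Lemma pnormZ (p : \bar R) k (c : R) (x : 'I_k -> R) : (1 <= p)%E -> 0 <= c ->
  pnorm p (fun i => c * x i) <= c * pnorm p x.
Proof.
case: p => [r||] //=; rewrite ?lee_fin => r1 c0.
- have r0 : 0 < r by apply: lt_le_trans r1.
  under eq_bigr do rewrite normrM powRM// ger0_norm//.
  rewrite -mulr_sumr powRM ?powR_ge0 ?sumr_ge0// => *; rewrite ?powR_ge0//.
  by rewrite -powRrM mulfV ?gt_eqF// powRr1.
- apply: bigmax_le; first by apply: mulr_ge0 => //; exact: (@pnorm_ge0 +oo%E _ x (leey _)).
  move=> i _; rewrite normrM ger0_norm//; apply: ler_wpM2l => //.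
  exact: le_bigmax.
Qed.

Lemma pnorm_eq0 (p : \bar R) k (x : 'I_k -> R) : (1 <= p)%E ->
  pnorm p x = 0 -> forall i, x i = 0.
Proof.
case: p => [r||] //=; rewrite ?lee_fin => r1.
- have r0 : 0 < r by apply: lt_le_trans r1.
  move=> /powR_eq0_eq0 /eqP; rewrite psumr_eq0 => [/allP H i|i _]; last first.
    exact: powR_ge0.
  have := H i (mem_index_enum _); rewrite implyTb => /eqP/powR_eq0_eq0/eqP.
  by rewrite normr_eq0 => /eqP.
- move=> H i; apply/eqP; rewrite -normr_eq0 eq_le normr_ge0 andbT -H.
  exact: le_bigmax.
Qed.


Section gen.
Variables (V : lmodType R) (g : V -> R).
Hypotheses (g0 : forall u, 0 <= g u) (gD : forall u w, g (u + w) <= g u + g w)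
  (gZ : forall (c : R) u, 0 <= c -> g (c *: u) <= c * g u).

Definition qg (a b : V) (h : R) := h^-1 * (g (a + h *: b) / g a - 1).

Lemma qg_mono a b h1 h2 : 0 < g a -> 0 < h1 -> h1 <= h2 -> qg a b h1 <= qg a b h2.
Proof.
move=> A0 h10 h12; have h20 : 0 < h2 by apply: lt_le_trans h12.
set t := h1 / h2.
have t0 : 0 <= t by rewrite divr_ge0 ?ltW.
have t1 : 0 <= 1 - t by rewrite subr_ge0 ler_pdivrMr// mul1r.
have eq : a + h1 *: b = (1 - t) *: a + t *: (a + h2 *: b).
  rewrite scalerDr scalerA /t mulfVK ?gt_eqF// addrA -scalerDl subrK scale1r//.
have key : g (a + h1 *: b) <= (1 - t) * g a + t * g (a + h2 *: b).
  rewrite eq; apply: le_trans (gD _ _) _; apply: lerD; exact: gZ.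
rewrite /qg -subr_ge0.
have -> : h2^-1 * (g (a + h2 *: b) / g a - 1) - h1^-1 * (g (a + h1 *: b) / g a - 1)
  = (t * (g (a + h2 *: b) - g a) - (g (a + h1 *: b) - g a)) / (h1 * g a).
  by rewrite /t; field; rewrite !gt_eqF.
apply: divr_ge0; last by rewrite ltW ?mulr_gt0.
rewrite subr_ge0; lra.
Qed.

Lemma qg_cvg a b : 0 < g a -> cvg ((fun h => (qg a b h)%:E) @ 0^'+).
Proof.
move=> A0; apply: nondecreasing_at_right_is_cvge; near=> x.
move=> h1 h2; rewrite !in_itv /= => /andP[h10 _] /andP[h20 _] h12.
by rewrite lee_fin; apply: qg_mono.
Unshelve. all: by end_near. Qed.

End gen.

Lemma alg_le (h A W s : R) : 0 < h -> 0 < A ->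
  (h^-1 * (W / A - 1) <= s) = (W <= (1 + h * s) * A).
Proof.
move=> h0 A0.
have -> : h^-1 * (W / A - 1) = (W - A) / (h * A) by field; rewrite !gt_eqF.
rewrite ler_pdivrMr ?mulr_gt0//.
apply/idP/idP => H; lra.
Qed.

End mink.

Section norms.
Context {R : realType} (p : \bar R) (n : nat) (Q : 'M[R]_n).
Hypotheses (p1 : (1 <= p)%E) (Qd : is_diag_mx Q) (Qpos : forall i, 0 < Q i i).

Lemma wnorm_ge0 x : 0 <= wnorm p Q x.
Proof. exact: pnorm_ge0. Qed.

Lemma wnormD x y : wnorm p Q (x + y) <= wnorm p Q x + wnorm p Q y.
Proof.
rewrite /wnorm; have -> : (fun i => (Q *m (x + y)) i 0) =
  (fun i => (Q *m x) i 0 + (Q *m y) i 0) by apply/funext => i; rewrite mulmxDr mxE.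
exact: pnormD.
Qed.

Lemma wnormZ (c : R) x : 0 <= c -> wnorm p Q (c *: x) <= c * wnorm p Q x.
Proof.
move=> c0; rewrite /wnorm; have -> : (fun i => (Q *m (c *: x)) i 0) =
  (fun i => c * (Q *m x) i 0) by apply/funext => i; rewrite -scalemxAr mxE.
exact: pnormZ.
Qed.

Lemma wnorm_eq0 x : wnorm p Q x = 0 -> x = 0.
Proof.
move=> /(@pnorm_eq0 _ _ _ _ p1) H; apply/matrixP => i j; rewrite ord1 mxE.
move: (H i); case/diag_mxP: Qd => d Qe.
move: (Qpos i); rewrite Qe mul_diag_mx !mxE eqxx mulr1n => dpos /eqP.
by rewrite mulf_eq0 (gt_eqF dpos) => /eqP.
Qed.

Lemma bnorm_ge0 N (u : 'M[R]_(n, N)) : 0 <= bnorm p Q u.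
Proof. exact: pnorm_ge0. Qed.

Lemma colD' N (i : 'I_N) (u w : 'M[R]_(n, N)) : col i (u + w) = col i u + col i w.
Proof. by apply/matrixP => j k; rewrite !mxE. Qed.

Lemma colZ' N (i : 'I_N) (c : R) (u : 'M[R]_(n, N)) : col i (c *: u) = c *: col i u.
Proof. by apply/matrixP => j k; rewrite !mxE. Qed.

Lemma bnormD N (u w : 'M[R]_(n, N)) : bnorm p Q (u + w) <= bnorm p Q u + bnorm p Q w.
Proof.
apply: le_trans (@pnormD _ p _ _ _ p1); apply: pnorm_le => // i.
rewrite !ger0_norm ?addr_ge0 ?wnorm_ge0// colD'; exact: wnormD.
Qed.

Lemma bnormZ N (c : R) (u : 'M[R]_(n, N)) : 0 <= c -> bnorm p Q (c *: u) <= c * bnorm p Q u.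
Proof.
move=> c0; apply: le_trans (@pnormZ _ p _ _ _ p1 c0); apply: pnorm_le => // i.
rewrite !ger0_norm ?mulr_ge0 ?wnorm_ge0// colZ'; exact: wnormZ.
Qed.

Lemma bnorm_eq0 N (u : 'M[R]_(n, N)) : bnorm p Q u = 0 -> u = 0.
Proof.
move=> /(@pnorm_eq0 _ _ _ _ p1) H; apply/matrixP => j i.
have := @wnorm_eq0 _ (H i) => /matrixP /(_ j 0); rewrite !mxE => ->.
by [].
Qed.

End norms.

Lemma colFt {R : realType} n N (F : 'cV[R]_n -> 'cV[R]_n) (u : 'M[R]_(n, N)) i :
  col i (Ftilde F u) = F (col i u).
Proof. by apply/matrixP => j k; rewrite !mxE ord1. Qed.

Lemma colB' {R : realType} n N (u w : 'M[R]_(n, N)) i : col i (u - w) = col i u - col i w.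
Proof. by apply/matrixP => j k; rewrite !mxE. Qed.

Theorem lemma11 (R : realType) (n N : nat) (V : set 'cV[R]_n)
  (F : 'cV[R]_n -> 'cV[R]_n) (p : \bar R) (Q : 'M[R]_n) :
  convex_subset V -> glob_lipschitz_on V F ->
  (1 <= p)%E ->
  is_diag_mx Q -> (forall i, 0 < Q i i) ->
  (@Mplus R p n N Q V F <= Mlog p Q V F)%E.
Proof.
move=> _ _ p1 Qd Qpos.
have wpos (x y : 'cV[R]_n) : x <> y -> 0 < wnorm p Q (x - y).
  move=> xy; rewrite lt_def (@wnorm_ge0 _ _ _ _ p1) andbT; apply/eqP => /(@wnorm_eq0 _ _ _ _ p1 Qd Qpos _).
  by move/eqP; rewrite subr_eq0 => /eqP.
apply: ge_ereal_sup => _ [u [v [Vu Vv uv ->]]].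
have A0 : 0 < bnorm p Q (u - v).
  rewrite lt_def (@bnorm_ge0 _ _ _ _ p1) andbT; apply/eqP => /(@bnorm_eq0 _ _ _ _ p1 Qd Qpos _ _).
  by move/eqP; rewrite subr_eq0 => /eqP.
have [i0 hi0] : exists i, col i u <> col i v.
  case: (pselect (exists i, col i u <> col i v)) => // H; exfalso; apply: uv.
  apply/matrixP => j i; have : col i u = col i v.
    by apply: contrapT => ne; apply: H; exists i.
  by move/matrixP => /(_ j 0); rewrite !mxE.
rewrite /Mlog; apply: (@lee_lim R^o (0^'+) _ R).

- exact: (@qg_cvg R _ (bnorm p Q) (@bnormD _ _ _ _ p1 N)
     (@bnormZ _ _ _ _ p1 N) _ _ A0).
- apply: nondecreasing_at_right_is_cvge; near=> x.
  move=> h1 h2; rewrite !in_itv /= => /andP[h10 _] /andP[h20 _] h12.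
  apply: ge_ereal_sup => _ [x' [y' [Vx Vy xy ->]]].
  apply: (@le_trans _ _ (qg _ (wnorm p Q) (x' - y') (F x' - F y') h2)%:E).
    rewrite lee_fin; apply: qg_mono => //.
    + exact: (@wnormD _ _ _ _ p1).
    + exact: (@wnormZ _ _ _ _ p1).
    + exact: wpos.
  by apply: ereal_sup_ubound; exists x', y'; split.
- near=> h.
  have h0 : 0 < h by near: h; exact: nbhs_right_gt.
  have key : forall x y, V x -> V y -> x <> y ->
    ((h^-1 * (wnorm p Q (x - y + h *: (F x - F y)) / wnorm p Q (x - y) - 1))%:E <=
    ereal_sup [set e | exists x y : 'cV[R]_n, [/\ V x, V y, x <> y &
      e = (h^-1 * (wnorm p Q (x - y + h *: (F x - F y)) / wnorm p Q (x - y) - 1))%:E]])%E.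
    by move=> x y Vx Vy xy; apply: ereal_sup_ubound; exists x, y; split.
  move: key; case: (ereal_sup _) => [s| |] key; last 2 first.
  + by rewrite leey.
  + by have := key _ _ (Vu i0) (Vv i0) hi0; rewrite leeNy_eq.
  have w0 : wnorm p Q 0 = 0.
    apply/le_anti; rewrite (@wnorm_ge0 _ _ _ _ p1) andbT.
    by have := @wnormZ _ p n Q p1 0 0 (lexx _); rewrite scaler0 mul0r.
  have Hi : forall i, wnorm p Q (col i (u - v + h *: (Ftilde F u - Ftilde F v)))
      <= (1 + h * s) * wnorm p Q (col i (u - v)).
    move=> i; rewrite colD' colZ' !colB' !colFt.
    case: (pselect (col i u = col i v)) => [->|ne].
      by rewrite !subrr scaler0 addr0 w0 mulr0.
    by have := key _ _ (Vu i) (Vv i) ne; rewrite lee_fin alg_le //; exact: wpos.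
  have c0 : 0 <= 1 + h * s.
    have := Hi i0; rewrite colB' => /(le_trans (@wnorm_ge0 _ _ _ _ p1 _)).
    by rewrite pmulr_lge0 //; exact: wpos.
  rewrite lee_fin alg_le //.
  apply: le_trans (@pnormZ _ p _ (1 + h * s) (fun i => wnorm p Q (col i (u - v))) p1 c0).
  apply: pnorm_le => // i; rewrite !ger0_norm ?mulr_ge0 ?(@wnorm_ge0 _ _ _ _ p1) //.
Unshelve. all: by end_near.
Qed.
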